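(* Assume the event $\mathcal{E}$ holds. Then the radius used by ILESS satisfies $$\sigma_{\mathrm{ILESS}} \le 6\frac{A}{m} + 3\sqrt{\frac{A}{m}\, R(f^* )} = O\!\left(\frac{A}{m} + \sqrt{\frac{A}{m}\, R(f^* )}\right),$$ where $f^*$ is any true risk minimizer in $\mathcal{F}$.
   Context: Let $\mathcal{F}$ be a hypothesis class of binary classifiers $\mathcal{X}\to\{\pm1\}$ with finite VC dimension $d$. Let $\mathcal{P}_{X,Y}$ be an unknown distribution on $\mathcal{X}\times\{\pm1\}$, and let $S_m$ be an i.i.d. sample of size $m$ from it. With the 0/1 loss, $R(f)=\Pr(f(X)\neq Y)$ is the true risk and $\hat R(f)=\hat R(f,S_m)$ is the empirical risk on $S_m$. $\hat f$ is an empirical risk minimizer over $\mathcal{F}$, and $f^*$ is a true risk minimizer over $\mathcal{F}$ (assumed to exist). Fix a confidence parameter $0<\delta<1$ and set $A \triangleq 4d\ln\!\big(\tfrac{16me}{d\delta}\big)$. The event $\mathcal{E}$ is the event that, simultaneously for every $f\in\mathcal{F}$, both of the following hold: $$R(f)\le \hat R(f)+\min\Big\{\tfrac{A}{m}+\sqrt{\tfrac{A}{m}\hat R(f)},\ \sqrt{\tfrac{A}{m}R(f)}\Big\},$$ $$\hat R(f)\le R(f)+\min\Big\{\tfrac{A}{m}+\sqrt{\tfrac{A}{m}R(f)},\ \sqrt{\tfrac{A}{m}\hat R(f)}\Big\}.$$ This event has probability at least $1-\delta$ (a uniform convergence bound of Dasgupta et al., based on Bousquet et al., combined with Sauer's lemma).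 The radius used by ILESS is $$\sigma_{\mathrm{ILESS}}=\frac{A}{m}+\sqrt{\frac{A}{m}\hat R(\hat f)}+\frac{A}{m}+\sqrt{\frac{A}{m}\Big[\hat R(\hat f)+\frac{A}{m}+\sqrt{\frac{A}{m}\hat R(\hat f)}\Big]}.$$ *)

(* Defs.v *)
From mathcomp Require Import all_boot all_order all_algebra.
From mathcomp Require Import all_classical all_reals all_analysis.

Set Implicit Arguments.
Unset Strict Implicit.
Unset Printing Implicit Defensive.

Import Order.TTheory GRing.Theory Num.Theory.
Local Open Scope classical_set_scope.
Local Open Scope ring_scope.

(* Labels {+1,-1} are encoded as bool (true = +1, false = -1).
   A classifier is a function X -> bool; a hypothesis class is a set of them. *)

Definition true_risk (R : realType) (d : measure_display) (X : measurableType d)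
  (P : probability (X * bool)%type R) (f : X -> bool) : R :=
  fine (P [set z | f z.1 != z.2]).

Definition emp_risk (R : realType) (X : Type) (S : seq (X * bool)) (f : X -> bool) : R :=
  (count (fun z => f z.1 != z.2) S)%:R / (size S)%:R.

Definition shatters (X : eqType) (F : set (X -> bool)) (s : seq X) : Prop :=
  uniq s /\
  forall lab : seq bool, size lab = size s -> exists2 f, F f & map f s = lab.

Definition VC_dim (X : eqType) (F : set (X -> bool)) (d : nat) : Prop :=
  (exists s : seq X, size s = d /\ shatters F s) /\
  (forall s : seq X, shatters F s -> (size s <= d)%N).

Definition A_const (R : realType) (m d : nat) (delta : R) : R :=
  4 * d%:R * ln (16 * m%:R * expR 1 / (d%:R * delta)).

Definition event_E (R : realType) (X : Type) (F : set (X -> bool))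
  (Rf Rh : (X -> bool) -> R) (a : R) : Prop :=
  forall f, F f ->
    Rf f <= Rh f + Num.min (a + Num.sqrt (a * Rh f)) (Num.sqrt (a * Rf f)) /\
    Rh f <= Rf f + Num.min (a + Num.sqrt (a * Rf f)) (Num.sqrt (a * Rh f)).

(* sigma_ILESS, as a function of a = A/m and rh = \hat R(\hat f). *)
Definition sigma_ILESS (R : realType) (a rh : R) : R :=
  a + Num.sqrt (a * rh) + a + Num.sqrt (a * (rh + a + Num.sqrt (a * rh))).

(* Main.v *)
Require Import Defs.
From mathcomp Require Import all_boot all_order all_algebra.
From mathcomp Require Import all_classical all_reals all_analysis.
From mathcomp Require Import ring lra.
Import Order.TTheory GRing.Theory Num.Theory.
Local Open Scope classical_set_scope.
Local Open Scope ring_scope.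

Lemma sqrt_le_of (R : realType) (x y : R) : 0 <= y -> x <= y ^+ 2 -> Num.sqrt x <= y.
Proof.
move=> y0 h; apply: le_trans (ler_wsqrtr h) _.
by rewrite sqrtr_sqr ger0_norm.
Qed.

Lemma sqrt_le_of_sq (R : realType) (q y : R) : 0 <= q -> 0 <= y -> q ^+ 2 <= y ^+ 2 -> q <= y.
Proof. by move=> q0 y0 h; rewrite -(ler_pXn2r (isT : (0 < 2)%N)) ?nnegrE. Qed.

Lemma emp_ge0 (R : realType) (X : Type) (S : seq (X * bool)) f : 0 <= emp_risk R S f.
Proof. by rewrite /emp_risk divr_ge0. Qed.

Lemma true_ge0 (R : realType) (d : measure_display) (X : measurableType d)
  (P : probability (X * bool)%type R) f : 0 <= true_risk P f.
Proof. by rewrite /true_risk fine_ge0. Qed.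

Theorem lemma4 (R : realType) (dX : measure_display) (X : measurableType dX)
  (F : set (X -> bool)) (d : nat) (P : probability (X * bool)%type R)
  (m : nat) (S : seq (X * bool)) (delta : R) (fhat fstar : X -> bool) :
  VC_dim F d ->
  (0 < m)%N -> size S = m ->
  0 < delta < 1 ->
  F fhat -> (forall f, F f -> emp_risk R S fhat <= emp_risk R S f) ->
  F fstar -> (forall f, F f -> true_risk P fstar <= true_risk P f) ->
  event_E F (true_risk P) (emp_risk R S) (A_const m d delta / m%:R) ->
  sigma_ILESS (A_const m d delta / m%:R) (emp_risk R S fhat)
    <= 6 * (A_const m d delta / m%:R)
       + 3 * Num.sqrt (A_const m d delta / m%:R * true_risk P fstar).
Proof.
move=> _ _ _ _ Fh hmin Fs _ E.
set a := A_const m d delta / m%:R.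
have ha : 0 <= a.
  rewrite leNgt; apply/negP => an.
  have z x : 0 <= x -> Num.sqrt (a * x) = 0.
    by move=> x0; apply: ler0_sqrtr; rewrite mulr_le0_ge0 // ltW.
  have [h1 h2] := E _ Fh.
  move: h1 h2; rewrite !z ?emp_ge0 ?true_ge0 // addr0.
  have m1 : Num.min a 0 <= a by rewrite ge_min lexx.
  set u := true_risk P fhat; set v := emp_risk R S fhat.
  lra.
set r := emp_risk R S fhat; set Rs := true_risk P fstar.
have r0 : 0 <= r by apply: emp_ge0.
have Rs0 : 0 <= Rs by apply: true_ge0.
set s := Num.sqrt a; set t := Num.sqrt Rs.
have s0 : 0 <= s by apply: sqrtr_ge0.
have t0 : 0 <= t by apply: sqrtr_ge0.
have as2 : a = s ^+ 2 by rewrite sqr_sqrtr.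
have Rt2 : Rs = t ^+ 2 by rewrite sqr_sqrtr.
have hst : Num.sqrt (a * Rs) = s * t by rewrite sqrtrM.
have hr : r <= Rs + a + s * t.
  have [_ h2] := E _ Fs.
  apply: le_trans (hmin _ Fs) _.
  apply: le_trans h2 _.
  rewrite -addrA lerD2l -hst.
  by rewrite ge_min lexx.
rewrite /sigma_ILESS -/r -/a hst.
move: (Num.sqrt (a * r)) (sqrtr_ge0 (a * r)) (sqr_sqrtr (mulr_ge0 ha r0)) => q q0 q2.
clearbody s t; clearbody a Rs r.
subst a Rs.
have st0 := mulr_ge0 s0 t0.
have ss0 := mulr_ge0 s0 s0.
have sst0 := mulr_ge0 ss0 st0.
have h1 : q <= s * t + s ^+ 2.
  apply: sqrt_le_of_sq => //; first by lra.
  rewrite q2.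
  have : s ^+ 2 * r <= s ^+ 2 * (t ^+ 2 + s ^+ 2 + s * t).
    apply: ler_wpM2l; [exact: sqr_ge0 | lra].
  have -> : (s * t + s ^+ 2) ^+ 2 = s ^+ 2 * (t ^+ 2 + s ^+ 2 + s * t) + s * s * (s * t).
    by ring.
  lra.
have h2 : Num.sqrt (s ^+ 2 * (r + s ^+ 2 + q)) <= s * t + 2 * s ^+ 2.
  apply: sqrt_le_of; first by lra.
  have hin : r + s ^+ 2 + q <= (t + 2 * s) ^+ 2.
    have -> : (t + 2 * s) ^+ 2 = t ^+ 2 + 4 * (s * t) + 4 * s ^+ 2 by ring.
    lra.
  have : s ^+ 2 * (r + s ^+ 2 + q) <= s ^+ 2 * (t + 2 * s) ^+ 2.
    apply: ler_wpM2l; [exact: sqr_ge0 | lra].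
  have -> : (s * t + 2 * s ^+ 2) ^+ 2 = s ^+ 2 * (t + 2 * s) ^+ 2 by ring.
  done.
lra.
Qed.
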